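(* Let $\{\mu_t\}$ be a free convolution semigroup as described in the context. Any martingale polynomial for $\{\mu_t\}$ is a (finite) linear combination, with complex coefficients, of the elements of the standard Sheffer system for $\{\mu_t\}$.
   Context: Let $\mu$ be a freely infinitely divisible probability measure on $\mathbb R$ with finite moments of all orders, and $\{\mu_t\}_{t\ge0}$ the free convolution semigroup with $\mu_0=\delta_0$, $\mu_1=\mu$, $R_{\mu_t}=tR_\mu$. Write $G_t(z)=\sum_n\langle\mu_t,x^n\rangle z^{-(n+1)}$ (Cauchy transform, formal series in $z^{-1}$), $K_t$ its compositional inverse, $K_t(z)=\frac1z+t\sum_{n\ge1}r_nz^{n-1}$ with $r_n$ the free cumulants of $\mu$, and $F_{s,t}=K_s\circ G_t$. Let $\mathrm{Res}_z(x)=\frac{1}{z-x}=\sum_{n\ge0}x^nz^{-(n+1)}$. For $s\le t$, $\mathcal K_{s,t}$ is the linear operator on $\mathbb C[x]$ determined (coefficientwise in the formal expansion in $z^{-1}$) by $\mathcal K_{s,t}(\mathrm{Res}_z)=\mathrm{Res}_{F_{s,t}(z)}$; these are the transition operators of the free Lévy process with distributions $\mu_t$, i.e. $\mathbb E_s[f(X(t))]=(\mathcal K_{s,t}f)(X(s))$. A martingale polynomial for $\{\mu_t\}$ is a function $p(x,t)$, polynomial in $x$ for each $t$, with $\mathcal K_{s,t}(p(\cdot,t))=p(\cdot,s)$ for all $s<t$. The standard Sheffer system for $\{\mu_t\}$ is the family $\{Q_n(x,t)\}_{n\ge0}$ defined by $\frac{1}{z(K_t(z)-x)}=\sum_{n\ge0}Q_n(x,t)z^n$;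 $Q_n$ is monic of degree $n$ in $x$. *)

(* Defs.v *)
From HB Require Import structures.
From mathcomp Require Import all_boot all_algebra.
From mathcomp Require Import all_classical all_reals all_analysis.
From mathcomp Require Import complex.
Set Implicit Arguments. Unset Strict Implicit. Unset Printing Implicit Defensive.
Import GRing.Theory Num.Theory.
Local Open Scope ring_scope.

Section FormalSeries.
Variable T : comNzRingType.

Definition ps := nat -> T.

Definition ps1 : ps := fun n => (n == 0)%:R.
Definition psX : ps := fun n => (n == 1)%:R.

Definition psmul (a b : ps) : ps := fun n => \sum_(i < n.+1) a i * b (n - i)%N.

Definition pspow (a : ps) (k : nat) : ps := iter k (psmul a) ps1.

(* composition f o g, meaningful when g 0 = 0 *)
Definition pscomp (f g : ps) : ps := fun n => \sum_(j < n.+1) f j * pspow g j n.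

(* multiplicative inverse of a series with constant term 1:
   1/a = sum_j (1 - a)^j, the coefficient of order n only involves j <= n *)
Definition psinv1 (a : ps) : ps :=
  fun n => \sum_(j < n.+1) pspow (fun k => ps1 k - a k) j n.
End FormalSeries.

Section FreeLevy.
Variable R : realType.
Local Notation C := R[i].
Local Open Scope complex_scope.

Definition moment (P : probability R R) (n : nat) : R :=
  fine (\int[P]_x (x ^+ n)%:E)%E.

Definition has_all_moments (P : probability R R) : Prop :=
  forall n : nat, P.-integrable setT (fun x => (x ^+ n)%:E).

(* Cauchy transform G(z) = sum_n m_n z^{-(n+1)}, as a formal power series
   in the variable w = z^{-1} *)
Definition Gser (m : nat -> C) : ps C :=
  fun n => if n is k.+1 then m k else 0.

(* z K(z) = 1 + sum_{n>=1} c_n z^n, where K(z) = 1/z + sum_{n>=1} c_n z^{n-1}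
   (c_0 is ignored) *)
Definition zK (c : nat -> C) : ps C := fun n => if n == 0%N then 1 else c n.

(* 1/K(u) = u / (u K(u)), a formal power series in u with zero constant term *)
Definition invK (c : nat -> C) : ps C := psmul (psX C) (psinv1 (zK c)).

(* K (with cumulant sequence c) is the compositional inverse of the Cauchy
   transform with moment sequence m:  G(K(z)) = z, i.e. in the variable
   v = 1/z :  sum_n m_n (1/K)^{n+1} = v.                                   *)
Definition is_comp_inverse (m c : nat -> C) : Prop :=
  pscomp (Gser m) (invK c) = psX C.

(* {mu_t}_{t>=0} is the free convolution semigroup with mu_0 = delta_0 and
   R_{mu_t} = t R_{mu_1}, mu_1 having free cumulants r_n; all mu_t have
   finite moments of all orders. *)
Definition free_conv_semigroup (mu : R -> probability R R) (r : nat -> R) : Prop :=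
  [/\ forall t, 0 <= t -> has_all_moments (mu t),
      mu 0 = \d_(0 : R) :> (set R -> \bar R) &
      forall t, 0 <= t ->
        is_comp_inverse (fun n => (moment (mu t) n)%:C) (fun n => (t * r n)%:C)].

(* 1 / F_{s,t}(z) where F_{s,t} = K_s o G_t : a formal power series in
   w = z^{-1} (equal to (1/K_s) o G_t) *)
Definition invF (mu : R -> probability R R) (r : nat -> R) (s t : R) : ps C :=
  pscomp (invK (fun n => (s * r n)%:C)) (Gser (fun n => (moment (mu t) n)%:C)).

(* Coefficient of w^k in Res_{F}(x) = 1/(F - x) = sum_n x^n (1/F)^{n+1},
   given phi = 1/F (a series in w with zero constant term). *)
Definition ResCoef (phi : ps C) (k : nat) : {poly C} :=
  \sum_(n < k) pspow phi n.+1 k *: 'X^n.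

(* The transition operator K_{s,t} on C[x]: determined coefficientwise by
   K_{s,t}(Res_z) = Res_{F_{s,t}(z)}; since Res_z(x) = sum_k x^k z^{-(k+1)},
   K_{s,t}(x^k) is the coefficient of z^{-(k+1)} in Res_{F_{s,t}(z)}(x). *)
Definition Kop (mu : R -> probability R R) (r : nat -> R) (s t : R)
  (p : {poly C}) : {poly C} :=
  \sum_(k < size p) p`_k *: ResCoef (invF mu r s t) k.+1.

Definition martingale_poly (mu : R -> probability R R) (r : nat -> R)
  (p : R -> {poly C}) : Prop :=
  forall s t, 0 <= s -> s < t -> Kop mu r s t (p t) = p s.

(* Standard Sheffer system: 1/(z (K_t(z) - x)) = sum_n Q_n(x,t) z^n, as a
   formal power series in z with coefficients in C[x];
   z (K_t(z) - x) = z K_t(z) - x z. *)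
Definition ShefferSer (r : nat -> R) (t : R) : ps {poly C} :=
  psinv1 (fun n => (zK (fun k => (t * r k)%:C) n)%:P - (n == 1%N)%:R *: 'X).

Definition Sheffer (r : nat -> R) (t : R) (n : nat) : {poly C} :=
  ShefferSer r t n.
End FreeLevy.

(* Main.v *)
Require Import Defs.
From HB Require Import structures.
From mathcomp Require Import all_boot all_algebra.
From mathcomp Require Import all_classical all_reals all_analysis.
From mathcomp Require Import complex.
From mathcomp Require Import ring.
Set Implicit Arguments. Unset Strict Implicit. Unset Printing Implicit Defensive.
Import GRing.Theory Num.Theory.
Local Open Scope ring_scope.

Lemma sum_widen (V : zmodType) (F : nat -> V) M K : (M <= K)%N ->
  (forall k, (M <= k)%N -> (k < K)%N -> F k = 0) ->
  \sum_(k < K) F k = \sum_(k < M) F k.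
Proof.
move=> MK H; rewrite -!(big_mkord xpredT) (big_cat_nat (leq0n M) MK) /=.
rewrite [X in _ + X]big_nat_cond [X in _ + X]big1 ?addr0 // => k /andP[/andP[a b] _].
exact: H.
Qed.

Section Trunc.
Variable T : comNzRingType.
Implicit Types p q : {poly T}.

Definition eqN (N : nat) p q := forall i, (i <= N)%N -> p`_i = q`_i.
Definition rep N (a : ps T) p := forall i, (i <= N)%N -> a i = p`_i.

Lemma eqN_refl N p : eqN N p p. Proof. by []. Qed.
Lemma eqN_sym N p q : eqN N p q -> eqN N q p.
Proof. by move=> H i Hi; rewrite H. Qed.
Lemma eqN_trans N p q r : eqN N p q -> eqN N q r -> eqN N p r.
Proof. by move=> H1 H2 i Hi; rewrite H1 // H2. Qed.
Lemma eqN_le N M p q : (M <= N)%N -> eqN N p q -> eqN M p q.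
Proof. by move=> MN H i Hi; apply: H; apply: leq_trans MN. Qed.

Lemma eqNP N p q : eqN N p q -> p = q + drop_poly N.+1 (p - q) * 'X^(N.+1).
Proof.
move=> H; have E := poly_take_drop N.+1 (p - q).
suff E0 : take_poly N.+1 (p - q) = 0.
  by rewrite E0 add0r in E; rewrite E addrC subrK.
apply/polyP => i; rewrite coef_take_poly coef0; case: ifP => // Hi.
by rewrite coefB H ?subrr.
Qed.

Lemma eqN_XM N q d : eqN N (q + d * 'X^(N.+1)) q.
Proof. by move=> i Hi; rewrite coefD coefMXn ltnS Hi addr0. Qed.

Lemma eqN_add N p p' q q' : eqN N p p' -> eqN N q q' -> eqN N (p + q) (p' + q').
Proof. by move=> H1 H2 i Hi; rewrite !coefD H1 ?H2. Qed.
Lemma eqN_opp N p p' : eqN N p p' -> eqN N (- p) (- p').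
Proof. by move=> H1 i Hi; rewrite !coefN H1. Qed.
Lemma eqN_sub N p p' q q' : eqN N p p' -> eqN N q q' -> eqN N (p - q) (p' - q').
Proof. by move=> H1 H2; apply: eqN_add H1 (eqN_opp H2). Qed.

Lemma eqN_mul N p p' q q' : eqN N p p' -> eqN N q q' -> eqN N (p * q) (p' * q').
Proof.
move=> H1 H2; rewrite (eqNP H1) (eqNP H2).
set d := drop_poly _ _; set e := drop_poly _ _; set X := 'X^_.
have -> : (p' + d * X) * (q' + e * X) = p' * q' + (d * (q' + e * X) + p' * e) * X by ring.
exact: eqN_XM.
Qed.

Lemma eqN_pow N p p' k : eqN N p p' -> eqN N (p ^+ k) (p' ^+ k).
Proof. by move=> H; elim: k => [|k IH]; rewrite ?expr0 // !exprS; apply: eqN_mul. Qed.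

Lemma eqN_sum N (I : Type) (r : seq I) (F G : I -> {poly T}) :
  (forall i, eqN N (F i) (G i)) -> eqN N (\sum_(i <- r) F i) (\sum_(i <- r) G i).
Proof. by move=> H j Hj; rewrite !coef_sum; apply: eq_bigr => i _; apply: H. Qed.

Lemma eqN_mulX N d : eqN N (d * 'X^(N.+1)) 0.
Proof. by have := @eqN_XM N 0 d; rewrite add0r. Qed.

Lemma zero_const_X q : q`_0 = 0 -> q = drop_poly 1 q * 'X.
Proof.
move=> H; rewrite -{1}(poly_take_drop 1 q) expr1.
suff -> : take_poly 1 q = 0 by rewrite add0r.
by apply/polyP => i; rewrite coef_take_poly coef0; case: i.
Qed.

Lemma zero_const_pow q k : q`_0 = 0 -> q ^+ k = (drop_poly 1 q) ^+ k * 'X^k.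
Proof. by move=> H; rewrite {1}(zero_const_X H) exprMn. Qed.

Lemma zero_const_coef q k i : q`_0 = 0 -> (i < k)%N -> (q ^+ k)`_i = 0.
Proof. by move=> H Hi; rewrite zero_const_pow // coefMXn Hi. Qed.

Lemma zero_const_coefk q k : q`_0 = 0 -> (q ^+ k)`_k = q`_1 ^+ k.
Proof.
move=> H; rewrite zero_const_pow // coefMXn ltnn subnn.
elim: k => [|k IH]; first by rewrite !expr0 coef1.
by rewrite !exprS coef0M IH coef_drop_poly.
Qed.

Lemma zero_const_powN N q : q`_0 = 0 -> eqN N (q ^+ N.+1) 0.
Proof. by move=> H; rewrite zero_const_pow //; apply: eqN_mulX. Qed.

Lemma eqN_comp_r N p q q' : eqN N q q' -> eqN N (p \Po q) (p \Po q').
Proof.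
move=> H; elim/poly_ind: p => [|p c IH]; first by rewrite !comp_poly0.
by rewrite !comp_poly_MXaddC; apply: eqN_add => //; apply: eqN_mul.
Qed.

Lemma eqN_comp N p p' q q' : eqN N p p' -> eqN N q q' -> q`_0 = 0 ->
  eqN N (p \Po q) (p' \Po q').
Proof.
move=> H1 H2 H0; apply: (@eqN_trans _ _ (p' \Po q)); last exact: eqN_comp_r.
rewrite (eqNP H1) comp_polyD comp_polyM comp_Xn_poly.
move=> i Hi; rewrite coefD.
rewrite [X in _ + X = _](_ : _ = 0) ?addr0 //.
rewrite mulrC; have := eqN_mul (@eqN_refl N (drop_poly N.+1 (p - p') \Po q)) (@zero_const_powN N _ H0).
by move=> /(_ i Hi); rewrite mulr0 coef0 mulrC.
Qed.

Lemma rep_eqN N a p q : rep N a p -> eqN N p q -> rep N a q.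
Proof. by move=> H1 H2 i Hi; rewrite H1 // H2. Qed.
Lemma rep_eqN2 N a p q : rep N a p -> rep N a q -> eqN N p q.
Proof. by move=> H1 H2 i Hi; rewrite -H1 // H2. Qed.
Lemma rep_le N M a p : (M <= N)%N -> rep N a p -> rep M a p.
Proof. by move=> MN H i Hi; apply: H; apply: leq_trans MN. Qed.
Lemma rep_tr N a : rep N a (\poly_(i < N.+1) a i).
Proof. by move=> i Hi; rewrite coef_poly ltnS Hi. Qed.

Lemma rep_1 N : rep N (ps1 T) 1.
Proof. by move=> i _; rewrite coef1. Qed.
Lemma rep_X N : rep N (psX T) 'X.
Proof. by move=> i _; rewrite coefX. Qed.

Lemma rep_mul N a b p q : rep N a p -> rep N b q -> rep N (psmul a b) (p * q).
Proof.
move=> H1 H2 i Hi; rewrite coefM /psmul; apply: eq_bigr => j _.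
have Hj : (j <= N)%N by apply: leq_trans Hi; rewrite -ltnS.
rewrite H1 // H2 //; apply: leq_trans Hi; exact: leq_subr.
Qed.

Lemma rep_pow N a p k : rep N a p -> rep N (pspow a k) (p ^+ k).
Proof.
move=> H; elim: k => [|k IH]; first exact: rep_1.
by rewrite exprS; apply: rep_mul.
Qed.

Lemma rep_sub N a b p q : rep N a p -> rep N b q -> rep N (fun k => a k - b k) (p - q).
Proof. by move=> H1 H2 i Hi; rewrite coefB H1 ?H2. Qed.

Lemma comp_polyE' p q M : (size p <= M)%N -> p \Po q = \sum_(j < M) p`_j *: q ^+ j.
Proof.
move=> H; rewrite comp_polyE (@sum_widen _ (fun j => p`_j *: q ^+ j) _ _ H) //.
by move=> k Hk _; rewrite nth_default ?scale0r.
Qed.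

Lemma rep_comp N f g P Q : rep N f P -> rep N g Q -> g 0%N = 0 ->
  rep N (pscomp f g) (P \Po Q).
Proof.
move=> H1 H2 H0 i Hi.
have Q0 : Q`_0 = 0 by rewrite -H2.
have E : eqN i P (take_poly i.+1 P).
  by move=> j Hj; rewrite coef_take_poly ltnS Hj.
rewrite (eqN_comp E (@eqN_refl i Q) Q0) //.
rewrite (comp_polyE' _ (size_take_poly _ _)) coef_sum /pscomp.
apply: eq_bigr => j _; rewrite coefZ coef_take_poly ltn_ord.
have Hj : (j <= N)%N by apply: leq_trans Hi; rewrite -ltnS.
by rewrite H1 // (@rep_pow i _ _ j (rep_le Hi H2)).
Qed.

Lemma geom p M : (1 - p) * \sum_(j < M) p ^+ j = 1 - p ^+ M.
Proof.
elim: M => [|M IH]; first by rewrite big_ord0 expr0 mulr0 subrr.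
rewrite big_ord_recr /= mulrDr IH exprS; ring.
Qed.

Lemma rep_inv N a p : rep N a p -> a 0%N = 1 ->
  rep N (psinv1 a) (\sum_(j < N.+1) (1 - p) ^+ j).
Proof.
move=> H H0 i Hi.
have H1 : rep N (fun k => ps1 T k - a k) (1 - p) by apply: rep_sub => //; exact: rep_1.
have Z : (1 - p)`_0 = 0 by rewrite -H1 // H0 subrr.
rewrite coef_sum (@sum_widen _ (fun j => ((1 - p) ^+ j)`_i) i.+1 N.+1 Hi) //.
  by apply: eq_bigr => j _; rewrite (@rep_pow N _ _ j H1).
by move=> k Hk _; apply: zero_const_coef.
Qed.

Lemma geomN N p : p`_0 = 0 -> eqN N ((1 - p) * \sum_(j < N.+1) p ^+ j) 1.
Proof.
move=> H; rewrite geom; have := eqN_sub (@eqN_refl N 1) (@zero_const_powN N _ H).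
by rewrite subr0.
Qed.

Lemma rep_zero_const N g k i : rep N g (\poly_(j < N.+1) g j) -> g 0%N = 0 ->
  (i < k)%N -> (i <= N)%N -> pspow g k i = 0.
Proof.
move=> H H0 Hik HiN; rewrite (@rep_pow N _ _ k H) // zero_const_coef //.
by rewrite coef_poly.
Qed.

End Trunc.

Section Series.
Variable T : comNzRingType.
Implicit Types f g : ps T.

Lemma pspow_zero g k i : g 0%N = 0 -> (i < k)%N -> pspow g k i = 0.
Proof. by move=> H0 Hik; apply: (@rep_zero_const _ i) => //; exact: rep_tr. Qed.

Lemma pspow_kk g k : g 0%N = 0 -> pspow g k k = g 1%N ^+ k.
Proof.
move=> H0; have H := @rep_tr _ k.+1 g.
rewrite (@rep_pow _ k.+1 _ _ k H) // zero_const_coefk; last by rewrite coef_poly.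
by rewrite coef_poly.
Qed.

Lemma pscomp0 f g : pscomp f g 0%N = f 0%N.
Proof. by rewrite /pscomp big_ord1 /= /ps1 /= mulr1. Qed.

Lemma comp_poly_exp (p q : {poly T}) j : (p ^+ j) \Po q = (p \Po q) ^+ j.
Proof.
elim: j => [|j IH]; first by rewrite !expr0 -polyC1 comp_polyC.
by rewrite !exprS comp_polyM IH.
Qed.

Lemma key_identity G Ls Lt j N : pscomp G Lt = psX T -> G 0%N = 0 -> Ls 0%N = 0 ->
  Lt 0%N = 0 -> pscomp (pspow (pscomp Ls G) j) Lt N = pspow Ls j N.
Proof.
move=> HGL G0 Ls0 Lt0.
set Ps := \poly_(i < N.+1) Ls i; set Pg := \poly_(i < N.+1) G i.
set Pl := \poly_(i < N.+1) Lt i.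
have hs : rep N Ls Ps by apply: rep_tr.
have hg : rep N G Pg by apply: rep_tr.
have hl : rep N Lt Pl by apply: rep_tr.
have h1 : rep N (pscomp (pspow (pscomp Ls G) j) Lt) (((Ps \Po Pg) ^+ j) \Po Pl).
  apply: rep_comp => //; apply: rep_pow; exact: rep_comp.
have h2 : eqN N (Pg \Po Pl) 'X.
  apply: rep_eqN2 (@rep_X _ N); rewrite -HGL; exact: rep_comp.
have h3 : eqN N (((Ps \Po Pg) ^+ j) \Po Pl) (Ps ^+ j).
  rewrite comp_poly_exp -comp_polyA; apply: eqN_pow.
  rewrite -{2}(comp_polyXr Ps); apply: eqN_comp => //.
  by rewrite h2 // coefX.
by rewrite h1 // h3 // -(@rep_pow _ N _ _ j hs).
Qed.

End Series.

Section Spec.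
Variable R : realType.
Local Notation C := R[i].

Lemma invK0 (c : nat -> C) : Defs.invK c 0%N = 0.
Proof. by rewrite /Defs.invK /psmul big_ord1 /psX /= mul0r. Qed.

Lemma invK1 (c : nat -> C) : Defs.invK c 1%N = 1.
Proof.
rewrite /Defs.invK /psmul big_ord_recr big_ord1 /psX /= mul0r add0r mul1r.
by rewrite /psinv1 big_ord1 /= /ps1.
Qed.

Lemma ResCoef_poly (phi : ps C) k : ResCoef phi k = \poly_(n < k) pspow phi n.+1 k.
Proof. by rewrite /ResCoef poly_def. Qed.

Lemma T1gen (G Ls Lt : ps C) n : pscomp G Lt = psX C -> G 0%N = 0 -> Ls 0%N = 0 ->
  Lt 0%N = 0 ->
  \sum_(k < n.+1) (ResCoef Lt n.+1)`_k *: ResCoef (pscomp Ls G) k.+1 = ResCoef Ls n.+1.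
Proof.
move=> HGL G0 Ls0 Lt0.
have phi0 : pscomp Ls G 0%N = 0 by rewrite pscomp0.
apply/polyP => j; rewrite coef_sum !ResCoef_poly coef_poly.
under eq_bigr => k _ do rewrite ResCoef_poly coefZ !coef_poly ltn_ord.
case: ifP => Hj.
  rewrite -(key_identity j.+1 n.+1 HGL G0 Ls0 Lt0) /pscomp [RHS]big_ord_recl.
  rewrite (@pspow_zero _ (pscomp Ls G) j.+1 0) // mul0r add0r; apply: eq_bigr => k _.
  rewrite lift0; case: ifP => Hjk; first by rewrite mulrC.
  have Hkj : (k.+1 < j.+1)%N by rewrite ltnS leqNgt Hjk.
  by rewrite mulr0 (pspow_zero phi0 Hkj) mul0r.
apply: big1 => k _; case: ifP => Hjk; last by rewrite mulr0.
by move: Hj; rewrite (leq_ltn_trans _ (ltn_ord k)) // -ltnS.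
Qed.

End Spec.

Section F3.
Variable R : realType.
Local Notation C := R[i].

Lemma eqN_map N (p q : {poly C}) : eqN N p q -> eqN N (p ^:P) (q ^:P).
Proof. by move=> H i Hi; rewrite !coef_map /= H. Qed.

Lemma F3 (c : nat -> C) n :
  psinv1 (fun k => (zK c k)%:P - (k == 1%N)%:R *: 'X) n = ResCoef (Defs.invK c) n.+1.
Proof.
set Z := zK c; set a := fun k => _.
have Z0 : Z 0%N = 1 by [].
set Pz := \poly_(i < n.+1) Z i.
have hz : rep n Z Pz by apply: rep_tr.
set Pv := \sum_(j < n.+1) (1 - Pz) ^+ j.
have hv : rep n (psinv1 Z) Pv by apply: rep_inv.
have Pz0 : (1 - Pz)`_0 = 0 by rewrite coefB coef1 -hz // Z0 subrr.
have hzv : eqN n (Pz * Pv) 1.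
  by have := @geomN _ n _ Pz0; rewrite (_ : 1 - (1 - Pz) = Pz) //; ring.
set A := \poly_(i < n.+1) a i.
have hA : rep n a A by apply: rep_tr.
have a0 : a 0%N = 1 by rewrite /a Z0 /= scale0r subr0.
set S := \sum_(j < n.+1) (1 - A) ^+ j.
have hS : rep n (psinv1 a) S by apply: rep_inv.
have A0 : (1 - A)`_0 = 0 by rewrite coefB coef1 -hA // a0 subrr.
have hAS : eqN n (A * S) 1.
  by have := @geomN _ n _ A0; rewrite (_ : 1 - (1 - A) = A) //; ring.
set x := ('X : {poly C}).
set v := Pv ^:P.
set u := x%:P * 'X * v.
have hA' : eqN n A (Pz ^:P - x%:P * 'X).
  move=> i Hi; rewrite -hA // coefB coef_map /= -hz // coefCM coefX /a.
  by case: (i == 1)%N; rewrite ?mulr1n ?mulr0n ?scale1r ?scale0r ?mulr1 ?mulr0.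
have hAv : eqN n (A * v) (1 - u).
  apply: (@eqN_trans _ _ _ ((Pz ^:P - x%:P * 'X) * v)).
    exact: eqN_mul hA' (@eqN_refl _ n v).
  rewrite mulrBl /v -rmorphM /= -/v -/u; apply: eqN_sub => //.
  by rewrite -(rmorph1 (map_poly (@polyC C))); apply: eqN_map.
have u0 : u`_0 = 0 by rewrite /u -mulrA coefCM coefXM /= mulr0.
set W := v * \sum_(k < n.+1) u ^+ k.
have hAW : eqN n (A * W) 1.
  rewrite /W mulrA; apply: eqN_trans (@geomN _ n _ u0).
  exact: eqN_mul hAv (@eqN_refl _ n _).
have hSW : eqN n S W.
  apply: (@eqN_trans _ _ _ (S * (A * W))).
    by rewrite -{1}(mulr1 S); apply: eqN_mul (@eqN_refl _ n _) (eqN_sym hAW).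
  rewrite mulrA (mulrC S) -{2}(mul1r W); exact: eqN_mul hAS (@eqN_refl _ n _).
rewrite hS // hSW // /W mulr_sumr coef_sum /ResCoef.
apply: eq_bigr => k _.
have -> : v * u ^+ k = x%:P ^+ k * ('X^k * v ^+ k.+1).
  by rewrite /u !exprMn exprS; ring.
rewrite -rmorphXn coefCM coefXnM ltnNge -ltnS ltn_ord /= /v -rmorphXn coef_map /=.
rewrite -mul_polyC mulrC; congr (_ * _); congr (_%:P).
set Q := \poly_(i < n.+2) psinv1 Z i.
have hQ : rep n.+1 (psinv1 Z) Q by apply: rep_tr.
have hL : rep n.+1 (Defs.invK c) ('X * Q) by apply: rep_mul => //; exact: rep_X.
rewrite -[psmul _ _ _]/(pspow (Defs.invK c) k.+1 n.+1).
rewrite (@rep_pow _ n.+1 _ _ k.+1 hL) // exprMn coefXnM ltnS ltnNge -ltnS ltn_ord /= subSS.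
apply: eqN_pow; first exact: rep_eqN2 hv (rep_le (leqnSn n) hQ).
exact: leq_subr.
Qed.

End F3.

Section Main.
Variable R : realType.
Local Notation C := R[i].
Local Open Scope complex_scope.

Lemma basis_ex (B : nat -> {poly C}) (hB1 : forall n, (B n)`_n = 1)
  (hB2 : forall n, (size (B n) <= n.+1)%N) M (q : {poly C}) :
  (size q <= M)%N -> exists c : nat -> C, q = \sum_(k < M) c k *: B k.
Proof.
elim: M q => [|M IH] q Hq.
  exists (fun _ => 0); rewrite big_ord0. by move/size_poly_leq0P: Hq.
set q' := q - q`_M *: B M.
have Hq' : (size q' <= M)%N.
  apply/leq_sizeP => j; rewrite leq_eqVlt => /orP[/eqP<-|Hj].
    by rewrite coefB coefZ hB1 mulr1 subrr.
  rewrite coefB coefZ (nth_default _ (leq_trans Hq Hj)).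
  by rewrite (nth_default _ (leq_trans (hB2 M) Hj)) mulr0 subrr.
have [c Hc] := IH q' Hq'.
exists (fun k => if k == M then q`_M else c k).
rewrite big_ord_recr /= eqxx -[LHS](subrK (q`_M *: B M) q) -/q' Hc; congr (_ + _).
by apply: eq_bigr => k _; rewrite (ltn_eqF (ltn_ord k)).
Qed.

Lemma basis_uniq (B : nat -> {poly C}) (hB1 : forall n, (B n)`_n = 1)
  (hB2 : forall n, (size (B n) <= n.+1)%N) M (c : nat -> C) :
  \sum_(k < M) c k *: B k = 0 -> forall k, (k < M)%N -> c k = 0.
Proof.
elim: M c => [|M IH] c H k Hk; first by [].
move: H; rewrite big_ord_recr /= => H.
have cM : c M = 0.
  have := congr1 (fun p : {poly C} => p`_M) H; rewrite coefD coef_sum coefZ hB1 mulr1 coef0.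
  rewrite big1 ?add0r // => i _.
  by rewrite coefZ nth_default ?mulr0 // (leq_trans (hB2 i)) // ltn_ord.
move: H; rewrite cM scale0r addr0 => H.
by move: Hk; rewrite ltnS leq_eqVlt => /orP[/eqP->//|Hk]; exact: IH H k Hk.
Qed.

Lemma KopE mu r s t (p : {poly C}) M : (size p <= M)%N ->
  Kop mu r s t p = \sum_(k < M) p`_k *: ResCoef (Defs.invF mu r s t) k.+1.
Proof.
move=> H; rewrite /Kop; symmetry.
apply: (@sum_widen _ (fun k => p`_k *: ResCoef (Defs.invF mu r s t) k.+1) _ _ H).
by move=> k Hk _; rewrite nth_default ?scale0r.
Qed.

Lemma KopD mu r s t (p q : {poly C}) :
  Kop mu r s t (p + q) = Kop mu r s t p + Kop mu r s t q.
Proof.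
rewrite (KopE _ _ _ _ (size_polyD p q)) (KopE _ _ _ _ (leq_maxl (size p) (size q))).
rewrite (KopE _ _ _ _ (leq_maxr (size p) (size q))) -big_split.
by apply: eq_bigr => k _; rewrite coefD scalerDl.
Qed.

Lemma KopZ mu r s t a (p : {poly C}) : Kop mu r s t (a *: p) = a *: Kop mu r s t p.
Proof.
rewrite (KopE _ _ _ _ (size_scale_leq a p)) (KopE _ _ _ _ (leqnn (size p))) scaler_sumr.
by apply: eq_bigr => k _; rewrite coefZ scalerA.
Qed.

Lemma Kop_sum mu r s t M (c : nat -> C) (B : nat -> {poly C}) :
  Kop mu r s t (\sum_(k < M) c k *: B k) = \sum_(k < M) c k *: Kop mu r s t (B k).
Proof.
elim: M => [|M IH]; first by rewrite !big_ord0 /Kop size_poly0 big_ord0.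
by rewrite !big_ord_recr /= KopD KopZ IH.
Qed.

Lemma Kop_Sheffer (mu : R -> probability R R) (r : nat -> R) (s t : R) n :
  is_comp_inverse (fun n => (moment (mu t) n)%:C) (fun n => (t * r n)%:C) ->
  Kop mu r s t (Sheffer r t n) = Sheffer r s n.
Proof.
move=> H; rewrite /Sheffer /ShefferSer !F3.
rewrite (KopE _ _ _ _ (_ : (size _ <= n.+1)%N)); last by rewrite ResCoef_poly size_poly.
by apply: T1gen => //; apply: invK0.
Qed.

Lemma Sheffer_coef (r : nat -> R) (t : R) n : (Sheffer r t n)`_n = 1 :> C.
Proof.
rewrite /Sheffer /ShefferSer F3 ResCoef_poly coef_poly ltnSn pspow_kk ?invK0 //.
by rewrite invK1 expr1n.
Qed.

Lemma Sheffer_size (r : nat -> R) (t : R) n : (size (Sheffer r t n : {poly C}) <= n.+1)%N.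
Proof. by rewrite /Sheffer /ShefferSer F3 ResCoef_poly size_poly. Qed.

End Main.

Unset Implicit Arguments.

Theorem lemma2p1 (R : realType) (mu : R -> probability R R) (r : nat -> R)
  (Hmu : free_conv_semigroup mu r)
  (p : R -> {poly R[i]}) (Hp : martingale_poly mu r p) :
  exists (N : nat) (c : nat -> R[i]),
    forall t : R, 0 <= t -> p t = \sum_(k < N) c k *: Sheffer r t k.
Proof.
case: Hmu => _ _ Hinv.
have hB1 t := @Sheffer_coef R r t.
have hB2 t := @Sheffer_size R r t.
set M0 := size (p 0).
have [c Hc] := basis_ex (hB1 0) (hB2 0) (leqnn M0).
set d := fun k => if (k < M0)%N then c k else 0.
exists M0, d => t; rewrite le0r => /orP[/eqP->|t0].
  by rewrite Hc; apply: eq_bigr => k _; rewrite /d ltn_ord.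
set K := maxn M0 (size (p t)).
have [e He] := basis_ex (hB1 t) (hB2 t) (leq_maxr M0 (size (p t))).
have widen (q : R) : \sum_(k < K) d k *: Sheffer r q k = \sum_(k < M0) d k *: Sheffer r q k.
  apply: (@sum_widen _ (fun k => d k *: Sheffer r q k) _ _ (leq_maxl _ _)).
  by move=> k Hk _; rewrite /d ltnNge Hk scale0r.
have H0 : p 0 = \sum_(k < K) d k *: Sheffer r 0 k.
  by rewrite widen Hc; apply: eq_bigr => k _; rewrite /d ltn_ord.
have H1 : \sum_(k < K) e k *: Sheffer r 0 k = p 0.
  rewrite -(Hp 0 t (order.Order.POrderTheory.lexx (0:R)) t0) He Kop_sum; apply: eq_bigr => k _.
  by rewrite Kop_Sheffer //; exact: (Hinv t (order.Order.POrderTheory.ltW t0)).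
have Eq k : (k < K)%N -> e k = d k.
  move=> kK; apply/eqP; rewrite -subr_eq0; apply/eqP.
  have HH : \sum_(i < K) (e i - d i) *: Sheffer r 0 i = 0.
    under eq_bigr => i _ do rewrite scalerBl.
    by rewrite sumrB H1 -H0 subrr.
  exact: (@basis_uniq R _ (hB1 0) (hB2 0) K (fun i => e i - d i) HH k kK).
rewrite He -widen; apply: eq_bigr => k _; by rewrite Eq.
Qed.
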